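(* Let $a(s),b(s)\in\mathbb{C}[s]$ be two nonzero polynomials, and let $(a\bullet b)(s)\in\mathbb{C}[s]$ be the monic polynomial such that $$\langle a(s),b(t)\rangle\cap\mathbb{C}[s+t]=\langle (a\bullet b)(s+t)\rangle,$$ where $\langle a(s),b(t)\rangle$ is the ideal generated by $a(s)$ and $b(t)$ in $\mathbb{C}[s,t]$, and the intersection is an ideal of the subring $\mathbb{C}[s+t]\subseteq\mathbb{C}[s,t]$. Then $a\bullet b=a*b$.
   Context: For a polynomial $p(s)\in\mathbb{C}[s]$, let $R_p\subseteq\mathbb{C}$ denote the set of the opposites of its roots (i.e. $\alpha\in R_p$ iff $p(-\alpha)=0$). For $\alpha\in R_p$, $m_\alpha(p)$ denotes the multiplicity of $-\alpha$ as a root of $p$. For nonzero $a,b\in\mathbb{C}[s]$, the star operation $a*b\in\mathbb{C}[s]$ is the monic polynomial with $R_{a*b}=R_a+R_b=\{\alpha+\beta:\alpha\in R_a,\beta\in R_b\}$ (with the convention that the sum of the empty set with any set is empty, so $a*b=1$ if $a$ or $b$ is constant) and, for every $\gamma\in R_{a*b}$, multiplicity $m_\gamma(a*b)=\max\{m_\alpha(a)+m_\beta(b)-1:\alpha\in R_a,\beta\in R_b,\ \alpha+\beta=\gamma\}$. *)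

(* Defs.v *)
From HB Require Import structures.
From mathcomp Require Import all_boot all_order all_algebra.
From mathcomp Require Import complex.
Set Implicit Arguments. Unset Strict Implicit. Unset Printing Implicit Defensive.
Import Order.TTheory GRing.Theory Num.Theory.
Local Open Scope ring_scope.

(* Polynomials in C[s] are {poly F}; polynomials in C[s,t] are
   {poly {poly F}}: the outer variable 'X is t, the inner variable
   (the coefficient ring {poly F}) is s. *)
Section Defs.
Variable F : closedFieldType.

Definition in_s (f : {poly F}) : {poly {poly F}} := f%:P.
Definition in_t (f : {poly F}) : {poly {poly F}} := map_poly polyC f.
Definition in_spt (f : {poly F}) : {poly {poly F}} :=
  (map_poly polyC f) \Po ('X + ('X : {poly F})%:P).

Definition in_ideal2 (g1 g2 h : {poly {poly F}}) : Prop :=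
  exists u v : {poly {poly F}}, h = u * g1 + v * g2.

Definition opp_roots (p : {poly F}) : seq F :=
  undup [seq - z | z <- sval (closed_field_poly_normal p)].

Definition mult (alpha : F) (p : {poly F}) : nat := mup (- alpha) p.

Definition star (a b : {poly F}) : {poly F} :=
  let pairs := [seq (x, y) | x <- opp_roots a, y <- opp_roots b] in
  \prod_(g <- undup [seq xy.1 + xy.2 | xy <- pairs])
     ('X + g%:P) ^+ (\max_(xy <- pairs | xy.1 + xy.2 == g)
                        (mult xy.1 a + mult xy.2 b - 1)%N).

Definition is_bullet (a b c : {poly F}) : Prop :=
  c \is monic /\
  forall p : {poly F}, in_ideal2 (in_s a) (in_t b) (in_spt p) <-> c %| p.

End Defs.

(* Main.v *)
Require Import Defs.
From HB Require Import structures.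
From mathcomp Require Import all_boot all_order all_algebra.
From mathcomp Require Import complex.
From mathcomp Require Import ring zify.
Import Order.TTheory GRing.Theory Num.Theory.
Local Open Scope ring_scope.

Lemma I2_gen1 (F : closedFieldType) (A B : {poly {poly F}}) : in_ideal2 A B A.
Proof. by exists 1, 0; rewrite mul1r mul0r addr0. Qed.
Lemma I2_gen2 (F : closedFieldType) (A B : {poly {poly F}}) : in_ideal2 A B B.
Proof. by exists 0, 1; rewrite mul1r mul0r add0r. Qed.
Lemma I2_0 (F : closedFieldType) (A B : {poly {poly F}}) : in_ideal2 A B 0.
Proof. by exists 0, 0; rewrite !mul0r addr0. Qed.
Lemma I2_add (F : closedFieldType) (A B P Q : {poly {poly F}}) :
  in_ideal2 A B P -> in_ideal2 A B Q -> in_ideal2 A B (P + Q).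
Proof. move=> [u [v ->]] [u' [v' ->]]; exists (u + u'), (v + v'); ring. Qed.
Lemma I2_mull (F : closedFieldType) (A B P Q : {poly {poly F}}) :
  in_ideal2 A B P -> in_ideal2 A B (Q * P).
Proof. move=> [u [v ->]]; exists (Q * u), (Q * v); ring. Qed.
Lemma I2_mulr (F : closedFieldType) (A B P Q : {poly {poly F}}) :
  in_ideal2 A B P -> in_ideal2 A B (P * Q).
Proof. by rewrite mulrC; apply: I2_mull. Qed.
Lemma I2_swap (F : closedFieldType) (A B P : {poly {poly F}}) :
  in_ideal2 A B P -> in_ideal2 B A P.
Proof. move=> [u [v ->]]; exists v, u; ring. Qed.
Lemma I2_sum (F : closedFieldType) (A B : {poly {poly F}}) n (G : 'I_n -> _) :
  (forall i, in_ideal2 A B (G i)) -> in_ideal2 A B (\sum_i G i).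
Proof.
move=> H; apply: (big_ind (in_ideal2 A B)) => //; [exact: I2_0|exact: I2_add].
Qed.
Lemma I2_weak (F : closedFieldType) (A B A' B' P : {poly {poly F}}) :
  (exists c, A = c * A') -> (exists d, B = d * B') ->
  in_ideal2 A B P -> in_ideal2 A' B' P.
Proof.
move=> [c ->] [d ->] [u [v ->]]; exists (u * c), (v * d); ring.
Qed.

Lemma I2_crt (F : closedFieldType) (X f g u v P : {poly {poly F}}) :
  u * f + v * g = 1 -> in_ideal2 X f P -> in_ideal2 X g P ->
  in_ideal2 X (f * g) P.
Proof.
move=> E [x1 [y1 E1]] [x2 [y2 E2]].
exists (x2 * u * f + x1 * v * g), (y2 * u + y1 * v).
have -> : (x2 * u * f + x1 * v * g) * X + (y2 * u + y1 * v) * (f * g)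
   = u * f * (x2 * X + y2 * g) + v * g * (x1 * X + y1 * f) by ring.
by rewrite -E1 -E2 -mulrDl E mul1r.
Qed.

Lemma crt_gen (F : closedFieldType)
  (phi : {rmorphism {poly F} -> {poly {poly F}}}) (A P : {poly {poly F}}) b :
  b != 0 ->
  (forall y, root b y -> in_ideal2 A (phi (('X - y%:P) ^+ mup y b)) P) ->
  in_ideal2 A (phi b) P.
Proof.
move: {2}(size b) (leqnn (size b)) => n; elim: n b => [|n IH] b.
  by rewrite leqn0 size_poly_eq0 => /eqP -> /eqP.
move=> hs bn0 H.
have [/closed_rootP [y ry]|] := boolP (size b != 1%N); last first.
  rewrite negbK => /size_poly1P [c c0 ->].
  exists 0, (P * phi (c^-1)%:P).
  by rewrite mul0r add0r -mulrA -rmorphM -polyCM mulVf // rmorph1 mulr1.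
have [m [r /implyP/(_ bn0) nry Eb]] := multiplicity_XsubC b y.
have mupb : mup y b = m.
  by rewrite Eb mupMr // mup_XsubCX eqxx.
have r0 : r != 0 by apply: contraNneq nry => ->; rewrite root0.
have m0 : (0 < m)%N.
  rewrite lt0n; apply/eqP => m0; move: ry; rewrite Eb m0 expr0 mulr1.
  by rewrite (negbTE nry).
have Ir : in_ideal2 A (phi r) P.
  apply: IH => //.
    move: hs; rewrite Eb size_mul ?expf_neq0 ?polyXsubC_eq0 // size_exp_XsubC.
    rewrite addnS /= => h; rewrite -ltnS; apply: leq_trans h; by rewrite -addn1 leq_add2l.
  move=> z rz.
  have zy : z != y by apply: contraNneq nry => <-.
  have -> : mup z r = mup z b.
    rewrite Eb mupMl //; rewrite /root horner_exp !hornerE expf_neq0 //.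
    by rewrite subr_eq0.
  by apply: H; rewrite Eb rootM rz.
have cop : coprimep r (('X - y%:P) ^+ m).
  by rewrite coprimep_sym coprimep_expl // coprimep_sym coprimep_XsubC.
have [[u v] /= Euv] := Bezout_coprimepP _ _ cop.
have /size_poly1P [c c0 Ec] : size (u * r + v * ('X - y%:P) ^+ m) == 1%N.
  by rewrite (eqp_size Euv) size_poly1.
rewrite Eb rmorphM.
apply: (@I2_crt F _ _ _ (phi ((c^-1)%:P * u)) (phi ((c^-1)%:P * v))).
  rewrite -!rmorphM -rmorphD -!mulrA -mulrDr Ec -polyCM mulVf // rmorph1 //.
  exact: Ir.
by rewrite -mupb; apply: H.
Qed.

Lemma comp_polyXn_gen (F : closedFieldType) (q r : {poly F}) m :
  (q ^+ m) \Po r = (q \Po r) ^+ m.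
Proof.
elim: m => [|m IH]; first by rewrite !expr0 comp_polyC.
by rewrite !exprS comp_polyM IH.
Qed.

Lemma in_spt_eval (F : closedFieldType) (p : {poly F}) (c : F) :
  (in_spt p).[c%:P] = p \Po ('X + c%:P).
Proof.
rewrite /in_spt horner_comp !hornerE addrC.
by [].
Qed.

Lemma eval_t (F : closedFieldType) (A B p : {poly F}) y :
  in_ideal2 (in_s A) (in_t B) (in_spt p) -> root B y ->
  A \Po ('X - y%:P) %| p.
Proof.
move=> [u [v E]] /eqP rB.
have : p \Po ('X + y%:P) = u.[y%:P] * A.
  rewrite -in_spt_eval E hornerD !hornerM /in_s /in_t hornerC.
  by rewrite (horner_map polyC) rB mulr0 addr0.
move=> /(congr1 (comp_poly ('X - y%:P))); rewrite comp_polyXaddC_K => ->.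
by rewrite comp_polyM dvdp_mull.
Qed.

Lemma deriv_in_spt (F : closedFieldType) (p : {poly F}) :
  (in_spt p)^`() = in_spt (p^`()).
Proof.
by rewrite /in_spt deriv_comp derivD derivX derivC addr0 mulr1 deriv_map.
Qed.

Lemma deriv_step (F : closedFieldType) (A p : {poly F}) y n :
  in_ideal2 (in_s A) (in_t (('X - y%:P) ^+ n.+1)) (in_spt p) ->
  in_ideal2 (in_s A) (in_t (('X - y%:P) ^+ n)) (in_spt p^`()).
Proof.
move=> [u [v E]].
have := congr1 (@deriv _) E; rewrite deriv_in_spt => ->.
rewrite derivD !derivM /in_s derivC /in_t deriv_map deriv_exp derivXsubC mul1r.
rewrite rmorphMn exprSr rmorphM /=.
exists u^`(), (v^`() * map_poly polyC ('X - y%:P) + v *+ n.+1).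
rewrite mulr0 addr0 mulrnAr !mulrDl mulrnAl; ring.
Qed.

Lemma mult_step (F : closedFieldType) (hc : forall k, (k.+1)%:R != 0 :> F)
  (p : {poly F}) g k : (0 < k)%N ->
  ('X - g%:P) ^+ k %| p -> ('X - g%:P) ^+ k %| p^`() ->
  ('X - g%:P) ^+ k.+1 %| p.
Proof.
case: k => [//|k] _ /dvdpP [r ->] H.
rewrite derivM deriv_exp derivXsubC mul1r /= in H.
rewrite (dvdp_addr _ (dvdp_mull _ (dvdpp _))) in H.
rewrite mulrnAr exprSr mulrC -mulrnAl dvdp_mul2r ?expf_neq0 ?polyXsubC_eq0 // in H.
move: H; rewrite dvdp_XsubCl /root hornerMn -mulr_natr mulf_eq0 (negbTE (hc k)) orbF.
move=> h; rewrite [_ ^+ k.+2]exprS dvdp_mul // dvdp_XsubCl; exact: h.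
Qed.

Lemma local_nec (F : closedFieldType) (hc : forall k, (k.+1)%:R != 0 :> F)
  x y m n (p : {poly F}) : (0 < m)%N -> (0 < n)%N ->
  in_ideal2 (in_s (('X - x%:P) ^+ m)) (in_t (('X - y%:P) ^+ n)) (in_spt p) ->
  ('X - (x + y)%:P) ^+ (m + n - 1)%N %| p.
Proof.
move=> m0; case: n => [//|n] _; elim: n p => [|n IH] p H.
  rewrite addn1 subn1 /=.
  have := @eval_t F _ _ p y H; rewrite comp_polyXn_gen comp_polyB comp_polyX.
  rewrite comp_polyC -addrA -opprD -polyCD [y + x]addrC; apply.
  by rewrite expr1 root_XsubC.
have H1 : in_ideal2 (in_s (('X - x%:P) ^+ m)) (in_t (('X - y%:P) ^+ n.+1))
            (in_spt p).
  apply: I2_weak H; first by exists 1; rewrite mul1r.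
  by exists (in_t ('X - y%:P)); rewrite /in_t -rmorphM -exprS.
have := IH _ H1; have := IH _ (@deriv_step _ _ _ _ _ H).
rewrite !addnS !subSS !subn0 => h1 h2.
by apply: mult_step => //; rewrite addn_gt0 m0.
Qed.

Lemma I2_dvd1 (F : closedFieldType) (A B P : {poly {poly F}}) :
  (exists c, P = c * A) -> in_ideal2 A B P.
Proof. by move=> [c ->]; exists c, 0; rewrite mul0r addr0. Qed.
Lemma I2_dvd2 (F : closedFieldType) (A B P : {poly {poly F}}) :
  (exists c, P = c * B) -> in_ideal2 A B P.
Proof. by move=> [c ->]; exists 0, c; rewrite mul0r add0r. Qed.

Lemma comp_polyXn_any (R : comNzRingType) (q r : {poly R}) m :
  (q ^+ m) \Po r = (q \Po r) ^+ m.
Proof.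
elim: m => [|m IH]; first by rewrite !expr0 comp_polyC.
by rewrite !exprS comp_polyM IH.
Qed.

Lemma in_spt_mul (F : closedFieldType) (p q : {poly F}) :
  in_spt (p * q) = in_spt p * in_spt q.
Proof. by rewrite /in_spt rmorphM comp_polyM. Qed.

Lemma in_spt_exp (F : closedFieldType) (p : {poly F}) k :
  in_spt (p ^+ k) = in_spt p ^+ k.
Proof.
elim: k => [|k IH]; last by rewrite !exprS in_spt_mul IH.
by rewrite !expr0 /in_spt rmorph1 comp_polyC.
Qed.

Lemma in_spt_XsubC (F : closedFieldType) (x y : F) :
  in_spt ('X - (x + y)%:P) = in_s ('X - x%:P) + in_t ('X - y%:P).
Proof.
rewrite /in_spt /in_s /in_t !map_polyXsubC comp_polyB comp_polyX comp_polyC.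
rewrite !(rmorphB, rmorphD) /=; ring.
Qed.

Lemma local_suff (F : closedFieldType) x y m n (p : {poly F}) :
  (0 < m)%N -> (0 < n)%N ->
  ('X - (x + y)%:P) ^+ (m + n - 1)%N %| p ->
  in_ideal2 (in_s (('X - x%:P) ^+ m)) (in_t (('X - y%:P) ^+ n)) (in_spt p).
Proof.
move=> m0 n0 /dvdpP [r ->]; rewrite in_spt_mul; apply: I2_mull.
rewrite in_spt_exp in_spt_XsubC /in_s /in_t !rmorphXn /=.
set A := ('X - x%:P)%:P; set B := map_poly polyC ('X - y%:P).
rewrite exprDn; apply: I2_sum => i.
have [lt_in|le_ni] := ltnP i n.
  apply: I2_dvd1; have h : (m <= m + n - 1 - i)%N by lia.
  exists (A ^+ (m + n - 1 - i - m) * B ^+ i *+ 'C(m + n - 1, i)).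
  have -> : A ^+ (m + n - 1 - i) = A ^+ (m + n - 1 - i - m) * A ^+ m
    by rewrite -exprD subnK.
  rewrite -!mulrnAl; ring.
apply: I2_dvd2.
exists (A ^+ (m + n - 1 - i) * B ^+ (i - n) *+ 'C(m + n - 1, i)).
have -> : B ^+ i = B ^+ (i - n) * B ^+ n by rewrite -exprD subnK.
rewrite -!mulrnAl; ring.
Qed.

Lemma root_mup (F : closedFieldType) (a : {poly F}) x :
  a != 0 -> root a x -> (0 < mup x a)%N.
Proof. by move=> a0 rx; rewrite -XsubC_dvd // dvdp_XsubCl. Qed.

Definition condC (F : closedFieldType) (a b p : {poly F}) :=
  forall x y, root a x -> root b y ->
    ('X - (x + y)%:P) ^+ (mup x a + mup y b - 1)%N %| p.
Arguments condC {F}.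

Lemma suff_all (F : closedFieldType) (a b p : {poly F}) :
  a != 0 -> b != 0 -> condC a b p ->
  in_ideal2 (in_s a) (in_t b) (in_spt p).
Proof.
move=> a0 b0 H; apply: I2_swap; rewrite /in_s.
apply: (@crt_gen F polyC) => // x rx; apply: I2_swap.
apply: (@crt_gen F (map_poly polyC)) => // y ry.
apply: local_suff; [exact: root_mup|exact: root_mup|exact: H].
Qed.

Lemma nec_all (F : closedFieldType) (hc : forall k, (k.+1)%:R != 0 :> F)
  (a b p : {poly F}) :
  a != 0 -> b != 0 -> in_ideal2 (in_s a) (in_t b) (in_spt p) -> condC a b p.
Proof.
move=> a0 b0 H x y rx ry.
apply: local_nec => //; [exact: root_mup|exact: root_mup|].
apply: I2_weak H.
  have : ('X - x%:P) ^+ mup x a %| a by rewrite -mup_geq.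
  by move=> /dvdpP [c {1}->]; exists (in_s c); rewrite /in_s polyCM.
have : ('X - y%:P) ^+ mup y b %| b by rewrite -mup_geq.
by move=> /dvdpP [c {1}->]; exists (in_t c); rewrite /in_t rmorphM.
Qed.

Lemma opp_roots_mem (F : closedFieldType) (a : {poly F}) al :
  a != 0 -> (al \in opp_roots a) = root a (- al).
Proof.
move=> a0; rewrite /opp_roots mem_undup.
case: closed_field_poly_normal => r /= Ea.
rewrite -{1}(opprK al) (mem_map oppr_inj).
by rewrite [in RHS]Ea rootZ ?lead_coef_eq0 // root_prod_XsubC.
Qed.


Lemma star_nec (F : closedFieldType) (a b p : {poly F}) :
  a != 0 -> b != 0 -> star a b %| p -> condC a b p.
Proof.
move=> a0 b0 H x y rx ry.
set al := - x; set be := - y.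
have ha : al \in opp_roots a by rewrite opp_roots_mem // opprK.
have hb : be \in opp_roots b by rewrite opp_roots_mem // opprK.
set pairs := [seq (x0, y0) | x0 <- opp_roots a, y0 <- opp_roots b].
have hp : (al, be) \in pairs by apply: allpairs_f.
have hg : al + be \in undup [seq xy.1 + xy.2 | xy <- pairs].
  by rewrite mem_undup; apply: (map_f (fun xy : F * F => xy.1 + xy.2) hp).
apply: dvdp_trans H; rewrite /star -/pairs (bigD1_seq _ hg (undup_uniq _)) /=.
apply: dvdp_mulr.
have -> : x + y = - (al + be) by rewrite opprD !opprK.
rewrite polyCN opprK.
apply: dvdp_exp2l.
have := @leq_bigmax_seq _ pairs (fun xy : F * F => xy.1 + xy.2 == al + be)
  (fun xy => (mult xy.1 a + mult xy.2 b - 1)%N) (al, be) hp (eqxx _).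
by rewrite /mult /= /al /be !opprK.
Qed.

Lemma prod_dvd (F : closedFieldType) (s : seq F) (k : F -> nat) (p : {poly F}) :
  uniq s -> (forall g, g \in s -> ('X + g%:P) ^+ k g %| p) ->
  \prod_(g <- s) ('X + g%:P) ^+ k g %| p.
Proof.
elim: s => [|g s IH] /=; first by rewrite big_nil dvd1p.
move=> /andP [gs us] H; rewrite big_cons Gauss_dvdp.
  by rewrite H ?mem_head // IH // => g' g's; apply: H; rewrite inE g's orbT.
apply: coprimep_expl.
rewrite -[g%:P]opprK -polyCN coprimep_sym coprimep_XsubC.
rewrite /root horner_prod prodf_seq_neq0; apply/allP => g' g's /=.
rewrite horner_exp !hornerE expf_neq0 //.
by apply: contraNneq gs => /eqP; rewrite addrC subr_eq0 => /eqP <-.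
Qed.

Lemma star_suff (F : closedFieldType) (a b p : {poly F}) :
  a != 0 -> b != 0 -> condC a b p -> star a b %| p.
Proof.
move=> a0 b0 H; rewrite /star; apply: prod_dvd; first exact: undup_uniq.
move=> g _; rewrite big_seq_cond.
apply: (big_ind (fun k => ('X + g%:P) ^+ k %| p)).
- by rewrite expr0 dvd1p.
- by move=> k1 k2 h1 h2; case: (leqP k1 k2).
move=> [al be] /andP [/allpairsP [[u v] /= [hu hv [-> ->]]] /eqP <-] /=.
rewrite opp_roots_mem // in hu; rewrite opp_roots_mem // in hv.
have := H _ _ hu hv; rewrite /mult.
by rewrite -opprD polyCN opprK.
Qed.

Theorem proposition2p1 (R : rcfType) (a b : {poly R[i]}) :
  a != 0 -> b != 0 ->
  forall c : {poly R[i]}, is_bullet a b c <-> c = star a b.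
Proof.
move=> a0 b0 c.
have hc : forall k, (k.+1)%:R != 0 :> R[i] by move=> k; rewrite pnatr_eq0.
have key : forall p, in_ideal2 (in_s a) (in_t b) (in_spt p) <-> star a b %| p.
  move=> p; split => H.
    by apply: star_suff => //; apply: nec_all.
  by apply: suff_all => //; apply: star_nec.
have sm : star a b \is monic.
  by rewrite /star; apply: monic_prod => g _; apply: monic_exp; exact: monicXaddC.
split.
  move=> [cm Hc].
  have h1 : c %| star a b by apply/Hc/key; exact: dvdpp.
  have h2 : star a b %| c by apply/key/Hc; exact: dvdpp.
  by apply/eqP; rewrite -eqp_monic // /eqp h1 h2.
by move=> ->; split.
Qed.
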